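(* Let $p$ be a prime and $k>1$ an integer, and let $t$ be a nonnegative integer with $t\le\min\{\log((k-1)/2),\ \log(p/2)\}$. Then for any distinct $g_0,g_1\in\mathbb{Z}_p$, there is no deterministic one-round $k$-party protocol for the Sum-Distinguish problem over $\mathbb{Z}_p$ relative to $g_0,g_1$ with per-party communication complexity $t$.
   Context: Model: parties $P_1,\dots,P_k$ each hold an input $x_i\in\mathbb{Z}_p$; a coordinator (distinct from the parties) wants to compute $f(x_1,\dots,x_k)$. In a deterministic one-round protocol each party sends a single message, a function of its own input only, to the coordinator, who outputs a value depending only on the received messages; there is no other communication. A protocol has per-party communication complexity $t$ if each party always sends exactly $t$ bits. Sum-Distinguish relative to distinct $g_0,g_1\in\mathbb{Z}_p$: the partial function $f$ with $f=1$ if $\sum_i x_i\equiv g_1\pmod p$ and $f=0$ if $\sum_i x_i\equiv g_0\pmod p$ (undefined otherwise); a protocol solves it if the coordinator outputs the correct value on every input on which $f$ is defined. $\log$ is base 2. *)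

(* Defs.v *)
From mathcomp Require Import all_boot all_algebra.
Set Implicit Arguments. Unset Strict Implicit. Unset Printing Implicit Defensive.
Import GRing.Theory.
Local Open Scope ring_scope.

(* A deterministic one-round k-party protocol over 'Z_p with per-party
   communication exactly t bits: party i sends msg i (x i), a t-bit string
   (a t.-tuple bool) depending only on i's own input; the coordinator outputs
   coord applied to the vector of received messages. *)
Record protocol (p k t : nat) := Protocol {
  msg : 'I_k -> 'Z_p -> t.-tuple bool;
  coord : {ffun 'I_k -> t.-tuple bool} -> nat
}.

Definition run (p k t : nat) (P : protocol p k t) (x : 'I_k -> 'Z_p) : nat :=
  coord P [ffun i => msg P i (x i)].

Definition solves_sum_distinguish (p k t : nat) (g0 g1 : 'Z_p)
    (P : protocol p k t) : Prop :=
  forall x : 'I_k -> 'Z_p,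
    ((\sum_(i < k) x i = g1) -> run P x = 1%N) /\
    ((\sum_(i < k) x i = g0) -> run P x = 0%N).

(* Main.v *)
Require Import Defs.
From mathcomp Require Import all_boot all_algebra zify.
Set Implicit Arguments. Unset Strict Implicit. Unset Printing Implicit Defensive.
Import GRing.Theory.
Local Open Scope ring_scope.

Section S.
Variable p : nat.
Hypothesis pP : prime p.

Lemma p_gt1 : (1 < p)%N. Proof. exact: prime_gt1. Qed.

Lemma cardZ : #|'Z_p| = p.
Proof. by rewrite card_ord Zp_cast // p_gt1. Qed.

Lemma closure (A : {set 'Z_p}) (a d : 'Z_p) : d != 0 -> a \in A ->
  (forall y, y \in A -> y + d \in A) -> A = setT.
Proof.
move=> d0 aA cl.
have hn : forall n, a + d *+ n \in A.
  elim=> [|n IH]; first by rewrite mulr0n addr0.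
  by rewrite mulrS addrCA addrC; apply: cl.
have du : d \is a GRing.unit.
  rewrite -(natr_Zp d) unitZpE ?p_gt1 // prime_coprime //.
  apply/negP => pd.
  have vp : (0 < val d)%N.
    rewrite lt0n; move: d0; apply: contra => /eqP h; apply/eqP/val_inj; exact: h.
  have dlt : (val d < p)%N by have := ltn_ord d; rewrite [X in (_ < X)%N -> _]Zp_cast ?p_gt1.
  by have := dvdn_leq vp pd; rewrite leqNgt dlt.
apply/setP => z; rewrite inE.
have := hn (val ((z - a) / d)).
by rewrite -mulr_natr natr_Zp mulrC divrK // addrC subrK.
Qed.

Definition sumset (A B : {set 'Z_p}) := [set x + y | x in A, y in B].

Lemma card_sumset_ge (A B : {set 'Z_p}) b : b \in B -> (#|A| <= #|sumset A B|)%N.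
Proof.
move=> bB.
have -> : #|A| = #|[set x + b | x in A]|.
  by rewrite card_imset //; apply: addIr.
apply: subset_leq_card; apply/subsetP => z /imsetP [x xA ->].
by apply: imset2_f.
Qed.

Lemma CD (n : nat) : forall A B : {set 'Z_p}, (#|B| <= n)%N -> A != set0 -> B != set0 ->
  (minn p (#|A| + #|B| - 1) <= #|sumset A B|)%N.
Proof.
elim: n => [|n IH] A B.
  by rewrite leqn0 cards_eq0 => /eqP -> _; rewrite eqxx.
move=> hB nA nB.
case/set0Pn: (nB) => b0 b0B.
case: (leqP #|B| 1) => hB1.
  apply: leq_trans (geq_minr _ _) _.
  apply: leq_trans (card_sumset_ge A b0B); lia.
case: (boolP (A == setT)) => [/eqP AT|AnT].
  apply: leq_trans (geq_minl _ _) _.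
  by rewrite -{1}cardZ -cardsT -AT; apply: card_sumset_ge b0B.
have [b1 b1B b10] : exists2 b1, b1 \in B & b1 != b0.
  case/card_gt1P: hB1 => x [y [xB yB xy]].
  case: (eqVneq x b0) => [xb0|xb0]; last by exists x.
  by exists y => //; rewrite -xb0 eq_sym.
case: (boolP [exists a in A, [exists b in B, a + (b - b0) \notin A]]); last first.
  move=> H; exfalso; move/negP: AnT; apply; apply/eqP.
  case/set0Pn: nA => a aA.
  apply: (closure (d := b1 - b0) _ aA); first by rewrite subr_eq0.
  move=> y yA; apply/negPn/negP => hn.
  move/negP: H; apply; apply/exists_inP; exists y => //; apply/exists_inP; exists b1 => //.
move/exists_inP => [a aA /exists_inP [b bB nab]].
set e := a - b0.
set E := [set y + e | y in B].
set A' := A :|: E.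
set B' := [set y in B | y + e \in A].
have b0B' : b0 \in B' by rewrite inE b0B /e addrC subrK.
have bB' : b \notin B' by rewrite inE bB /= /e addrCA.
have ltB : (#|B'| < #|B|)%N.
  apply: proper_card; apply/properP; split; last by exists b.
  by apply/subsetP => y; rewrite inE => /andP [].
have nA' : A' != set0.
  case/set0Pn: nA => x xA; apply/set0Pn; exists x; by rewrite inE xA.
have nB' : B' != set0 by apply/set0Pn; exists b0.
have := IH A' B' (leq_trans ltB hB) nA' nB'.
have cardE : #|E| = #|B| by rewrite card_imset //; apply: addIr.
have AE : A :&: E = [set y + e | y in B'].
  apply/setP => z; apply/idP/idP.
    rewrite inE => /andP [zA /imsetP [y yB zE]]; apply/imsetP; exists y => //.
    by rewrite inE yB -zE zA.
  move/imsetP => [y]; rewrite inE => /andP [yB yeA] ->; rewrite inE yeA.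
  exact: imset_f.
have cardAE : #|A :&: E| = #|B'| by rewrite AE card_imset //; apply: addIr.
have sum_eq : (#|A'| + #|B'| = #|A| + #|B|)%N by rewrite -cardAE cardsUI cardE.
rewrite sum_eq => h; apply: leq_trans h _.
apply: subset_leq_card; apply/subsetP => z /imset2P [u v uA'].
rewrite inE => /andP [vB veA] ->.
move: uA'; rewrite in_setU => /orP [uA | /imsetP [y yB ->]]; first exact: imset2_f.
have -> : y + e + v = (v + e) + y by rewrite -addrA addrC (addrC e).
exact: imset2_f.
Qed.

Definition famsum n (C : 'I_n -> {set 'Z_p}) : {set 'Z_p} :=
  [set z | [exists x : {ffun 'I_n -> 'Z_p}, [forall i, x i \in C i] && (z == \sum_i x i)]].

Lemma famsum_card n : forall (C : 'I_n -> {set 'Z_p}), (forall i, C i != set0) ->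
  (minn p (\sum_(i < n) (#|C i| - 1) + 1) <= #|famsum C|)%N.
Proof.
elim: n => [|n IH] C nC.
  rewrite big_ord0 add0n; apply: leq_trans (geq_minr _ _) _.
  rewrite card_gt0; apply/set0Pn; exists 0; rewrite inE; apply/existsP.
  exists [ffun i => 0]; apply/andP; split; first by apply/forallP => -[].
  by rewrite big_ord0.
set C' := fun i : 'I_n => C (lift ord0 i).
have := IH C' (fun i => nC _).
have sub : sumset (C ord0) (famsum C') \subset famsum C.
  apply/subsetP => z /imset2P [c w cC wF ->].
  move: wF; rewrite inE => /existsP [x /andP [/forallP xC /eqP ->]].
  rewrite inE; apply/existsP.
  exists [ffun i => if unlift ord0 i is Some j then x j else c].
  apply/andP; split.
    apply/forallP => i; rewrite ffunE; case: unliftP => [j ->|->].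
      exact: xC.
    by [].
  rewrite big_ord_recl ffunE unlift_none; apply/eqP; congr (_ + _).
  by apply: eq_bigr => i _; rewrite ffunE liftK.
move=> hI.
have nF : famsum C' != set0.
  rewrite -card_gt0; apply: leq_trans hI; rewrite leq_min addn1 andbT.
  exact: prime_gt0.
have h2 := CD (leqnn #|famsum C'|) (nC ord0) nF.
have h3 := subset_leq_card sub.
have h4 : (0 < #|C ord0|)%N by rewrite card_gt0.
rewrite big_ord_recl.
move: hI h2 h3 h4.
rewrite /C'.
move: (\sum_(i < n) _)%N (#|famsum _|) (#|famsum C|) (#|C ord0|) (#|sumset _ _|) => a b c d e.
move=> *; lia.
Qed.
End S.
Lemma pigeon (T : finType) (t : nat) (f : T -> t.-tuple bool) :
  exists m, (#|T| <= #|[set z | f z == m]| * 2 ^ t)%N.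
Proof.
apply/existsP; apply: contraT => /existsPn H.
have hs : (\sum_(m : t.-tuple bool) #|[set z | f z == m]| = #|T|)%N.
  rewrite -sum1_card (partition_big f xpredT) //=.
  apply: eq_bigr => m _; rewrite -sum1_card; apply: eq_bigl => z; by rewrite inE.
have : (\sum_(m : t.-tuple bool) (#|[set z | f z == m]| * 2 ^ t + 1) <= \sum_(m : t.-tuple bool) #|T|)%N.
  by apply: leq_sum => m _; rewrite addn1 ltnNge H.
rewrite sum_nat_const card_tuple card_bool big_split /= -big_distrl /= hs sum_nat_const card_tuple card_bool.
have := expn_gt0 2 t; move: (2 ^ t)%N (#|T|) => a b; clear; nia.
Qed.

Theorem theorem3p4 (p k t : nat) :
  prime p -> (1 < k)%N ->
  (2 ^ t.+1 <= k - 1)%N -> (2 ^ t.+1 <= p)%N ->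
  forall g0 g1 : 'Z_p, g0 != g1 ->
  ~ exists P : protocol p k t, solves_sum_distinguish g0 g1 P.
Proof.
move=> pP k1 hk hp g0 g1 _ [P sol].
have big : forall i : 'I_k, exists m, (#|'Z_p| <= #|[set z | msg P i z == m]| * 2 ^ t)%N.
  move=> i; exact: pigeon.
pose mo i := xchoose (big i).
pose C i := [set z | msg P i z == mo i].
have hC : forall i, (p <= #|C i| * 2 ^ t)%N.
  move=> i; have := xchooseP (big i); rewrite [X in (X <= _)%N -> _](cardZ pP); exact.
have nC : forall i, C i != set0.
  move=> i; rewrite -card_gt0; have := hC i; have := prime_gt0 pP.
  move: (#|C i|) => c; case: c => // ; rewrite mul0n; lia.
have hC2 : forall i, (p <= (#|C i| - 1) * 2 ^ t.+1)%N.
  move=> i; have := hC i; move: hp; rewrite expnS.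
  have := expn_gt0 2 t; move: (2 ^ t)%N (#|C i|) => a c; clear; nia.
have hsum : (p <= \sum_(i < k) (#|C i| - 1))%N.
  have h1 : (\sum_(i < k) p <= \sum_(i < k) (#|C i| - 1) * 2 ^ t.+1)%N.
    by apply: leq_sum => i _; exact: hC2.
  move: h1; rewrite sum_nat_const card_ord -big_distrl /=.
  move: hk; have := expn_gt0 2 t.+1.
  move: (2 ^ t.+1)%N (\sum_(i < k) _)%N => a s; clear; nia.
have hF := famsum_card pP nC.
have FT : famsum C = setT.
  apply/eqP; rewrite eqEcard subsetT cardsT (cardZ pP).
  apply: leq_trans hF; rewrite leq_min leqnn /=; exact: leq_trans hsum (leq_addr _ _).
have : g0 \in famsum C by rewrite FT inE.
rewrite inE => /existsP [x0 /andP [/forallP x0C /eqP s0]].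
have : g1 \in famsum C by rewrite FT inE.
rewrite inE => /existsP [x1 /andP [/forallP x1C /eqP s1]].
have e : run P x0 = run P x1.
  rewrite /run; have -> // : [ffun i => msg P i (x0 i)] = [ffun i => msg P i (x1 i)].
  apply/ffunP => i; rewrite !ffunE.
  by move: (x0C i) (x1C i); rewrite !inE => /eqP -> /eqP ->.
have := (sol x0).2 (esym s0); have := (sol x1).1 (esym s1).
by rewrite e => ->.
Qed.
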